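(* Let $p=p(n)$ and $k=k(n)$ satisfy $p\ge 10^6\log n/n$ and $pk\le 10^{-3}$. Then for any $k$-bounded edge colouring $\phi$ of $K_n$, with probability $1-o(1)$ (as $n\to\infty$) every vertex $v$ of $\Gamma=G(n,p)$ satisfies $\deg_{\Gamma(\phi)}(v)\ge\frac23\deg_\Gamma(v)$.
   Context: $G(n,p)$ is the random graph on $[n]$ with each edge present independently with probability $p$; here it is viewed as a random subgraph of $K_n$. An edge colouring $\phi$ of $K_n$ is $k$-bounded if no colour is used on more than $k$ edges. For a subgraph $\Gamma\subseteq K_n$, $\Gamma(\phi)$ denotes the graph obtained from $\Gamma$ by deleting every edge of $\Gamma$ whose colour under $\phi$ appears on more than one edge of $\Gamma$. *)

(* Defs.v *)
From HB Require Import structures.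
From mathcomp Require Import all_boot all_order all_algebra.
From mathcomp Require Import reals exp.
Set Implicit Arguments. Unset Strict Implicit. Unset Printing Implicit Defensive.
Import Order.TTheory GRing.Theory Num.Theory.
Local Open Scope ring_scope.

(* An edge of K_n on vertex set 'I_n is a 2-element subset of 'I_n.
   A subgraph of K_n is a set of such edges. *)
Definition Kedges (n : nat) : {set {set 'I_n}} :=
  [set e : {set 'I_n} | #|e| == 2%N].

Definition colouring (n : nat) := {set 'I_n} -> nat.

Definition k_bounded (n k : nat) (phi : colouring n) : Prop :=
  forall c : nat, (#|[set e in Kedges n | phi e == c]| <= k)%N.

Definition rainbow_part (n : nat) (phi : colouring n) (G : {set {set 'I_n}})
  : {set {set 'I_n}} :=
  [set e in G | #|[set f in G | phi f == phi e]| == 1%N].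

Definition deg (n : nat) (G : {set {set 'I_n}}) (v : 'I_n) : nat :=
  #|[set e in G | v \in e]|.

(* Probability that G(n,p) (a random subgraph of K_n, each edge kept
   independently with probability p) satisfies the event A. *)
Definition Gnp_prob (R : realType) (n : nat) (p : R)
  (A : {set {set 'I_n}} -> bool) : R :=
  \sum_(G : {set {set 'I_n}} | (G \subset Kedges n) && A G)
     p ^+ #|G| * (1 - p) ^+ (#|Kedges n| - #|G|).

Definition good_event (n : nat) (phi : colouring n) (G : {set {set 'I_n}}) : bool :=
  [forall v : 'I_n, 2 * deg G v <= 3 * deg (rainbow_part phi G) v]%N.

(* Main.v *)
Require Import Defs.
From HB Require Import structures.
From mathcomp Require Import all_boot all_order all_algebra.
From mathcomp Require Import reals exp sequences.
From mathcomp Require Import ring lra zify.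
Import Order.TTheory GRing.Theory Num.Theory.
Local Open Scope ring_scope.
Set Implicit Arguments. Unset Strict Implicit.

Section SetSums.
Variable (R : realType) (T : finType).

Lemma sum_setU1 (x : T) (A : {set T}) (G : {set T} -> R) : x \notin A ->
  \sum_(S : {set T} | S \subset x |: A) G S
  = \sum_(S : {set T} | S \subset A) (G S + G (x |: S)).
Proof.
move=> xA; rewrite big_split /=.
rewrite [LHS](bigID (fun S : {set T} => x \in S)) /= addrC; congr (_ + _).
  apply: eq_bigl => S; apply/idP/idP.
    case/andP=> sub xS; apply/subsetP=> y yS; have := subsetP sub y yS.
    rewrite !inE; case/orP=> [/eqP eyx|//]; by rewrite -eyx yS in xS.
  move=> sub; rewrite (subset_trans sub (subsetUr _ _)) /=.
  by apply/negP=> xS; rewrite (subsetP sub x xS) in xA.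
rewrite (reindex_onto (fun S => x |: S) (fun S => S :\ x)) /=; last first.
  by move=> S /andP[_ xS]; rewrite setD1K.
apply: eq_bigl => S; rewrite setU11 andbT.
case xS: (x \in S).
  have -> : (S \subset A) = false.
    by apply/negbTE/negP=> sub; rewrite (subsetP sub x xS) in xA.
  apply/negbTE; apply/negP=> /andP[_ /eqP e].
  have : x \in (x |: S) :\ x by rewrite e.
  by rewrite setD11.
rewrite setU1K ?xS // eqxx andbT; apply/idP/idP; last exact: setUS.
move=> sub; apply/subsetP=> y yS; have := subsetP sub y (setU1r x yS).
rewrite !inE; case/orP=> [/eqP eyx|//]; by rewrite -eyx yS in xS.
Qed.

Lemma set_ind' (P : {set T} -> Prop) : P set0 ->
  (forall (x : T) (A : {set T}), x \notin A -> P A -> P (x |: A)) -> forall A, P A.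
Proof.
move=> P0 Pstep A; move: {2}#|A| (erefl #|A|) => m; elim: m A => [|m IH] A hA.
  by move/eqP: hA; rewrite cards_eq0 => /eqP->.
have : (0 < #|A|)%N by rewrite hA.
case/card_gt0P => x xA; rewrite -(setD1K xA); apply: Pstep; first by rewrite setD11.
by apply: IH; move: hA; rewrite (cardsD1 x) xA add1n => -[].
Qed.

Lemma sum_sub0 (G : {set T} -> R) :
  \sum_(S : {set T} | S \subset set0) G S = G set0.
Proof.
rewrite (eq_bigl (pred1 set0)); last by move=> S; rewrite /= subset0.
by rewrite big_pred1_eq.
Qed.

Lemma PF (A : {set T}) (u : T -> bool -> R) :
  \sum_(S : {set T} | S \subset A) \prod_(y in A) u y (y \in S)
  = \prod_(y in A) (u y false + u y true).
Proof.
elim/set_ind': A => [|x A xA IH]; first by rewrite sum_sub0 !big_set0.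
rewrite sum_setU1 // big_setU1 //= -IH big_distrr /=.
apply: eq_bigr => S sSA.
have xS : x \notin S by apply: contra xA; apply: (subsetP sSA).
rewrite !big_setU1 //= setU11 (negbTE xS) mulrDl; congr (_ + _); congr (_ * _);
  apply: eq_bigr => y yA; rewrite in_setU1 (_ : (y == x) = false) //;
  by apply/negbTE; apply: contraNneq xA => <-.
Qed.

Lemma sum_splitU (A B : {set T}) (f : {set T} -> R) :
  (forall y, y \in B -> y \notin A) ->
  \sum_(G : {set T} | G \subset A :|: B) f G
  = \sum_(S : {set T} | S \subset A) \sum_(T0 : {set T} | T0 \subset B) f (S :|: T0).
Proof.
elim/set_ind': B f => [|x B xB IH] f dis.
  rewrite setU0; apply: eq_bigr => S _; by rewrite sum_sub0 setU0.
have xA : x \notin A by apply: dis; rewrite setU11.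
rewrite setUCA sum_setU1; last by rewrite in_setU negb_or xA.
rewrite (IH (fun G => f G + f (x |: G))); last by move=> y yB; apply: dis; rewrite in_setU1 yB orbT.
apply: eq_bigr => S _; rewrite sum_setU1 //; apply: eq_bigr => T0 _.
by rewrite setUCA.
Qed.

Definition Wt (p : R) (A S : {set T}) : R :=
  \prod_(y in A) (if y \in S then p else 1 - p).

Lemma Wt_splitU p (A B S T0 : {set T}) : (forall y, y \in B -> y \notin A) ->
  S \subset A -> T0 \subset B -> Wt p (A :|: B) (S :|: T0) = Wt p A S * Wt p B T0.
Proof.
move=> dis sSA sTB; rewrite /Wt (bigID (mem A)) /=; congr (_ * _).
  rewrite (eq_bigl (mem A)); last first.
    by move=> y; rewrite /= in_setU; case: (y \in A); rewrite ?andbT ?andbF.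
  apply: eq_bigr => y yA; rewrite in_setU.
  have -> : (y \in T0) = false.
    by apply/negP=> /(subsetP sTB) /dis /negP H; apply: H.
  by rewrite orbF.
rewrite (eq_bigl (mem B)); last first.
  move=> y; rewrite /= in_setU; case yA: (y \in A); rewrite /= ?andbT ?andbF.
    by apply/esym/negP=> /dis; rewrite yA.
  by [].
apply: eq_bigr => y yB; rewrite in_setU.
have -> : (y \in S) = false.
  by apply/negP=> /(subsetP sSA); apply/negP; apply: dis.
by [].
Qed.
End SetSums.

Unset Implicit Arguments. Set Strict Implicit.

Lemma cardsU_dis (T : finType) (A B : {set T}) :
  (forall y, y \in B -> y \notin A) -> #|A :|: B| = (#|A| + #|B|)%N.
Proof.
move=> dis; rewrite cardsU.
have -> : A :&: B = set0.
  apply/setP=> y; rewrite !inE; case yB: (y \in B); last by rewrite andbF.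
  by rewrite (negbTE (dis y yB)).
by rewrite cards0 subn0.
Qed.

Lemma sum_ge_term (R : realType) (I : finType) (P : pred I) (G : I -> R) j :
  P j -> (forall i, P i -> 0 <= G i) -> G j <= \sum_(i | P i) G i.
Proof.
move=> Pj h; rewrite (bigD1 j) //= lerDl; apply: sumr_ge0 => i /andP[Pi _]; exact: h.
Qed.

Section Graph.
Variables (R : realType) (n : nat) (phi : colouring n) (v : 'I_n).
Notation ET := {set 'I_n}.

Definition F (G : {set ET}) : R :=
  4 ^+ deg G v / 8 ^+ deg (rainbow_part phi G) v.

Lemma F_ge0 G : 0 <= F G.
Proof. by rewrite /F divr_ge0 // exprn_ge0. Qed.

Lemma deg_U (G1 G2 : {set ET}) : (forall y, y \in G2 -> y \notin G1) ->
  deg (G1 :|: G2) v = (deg G1 v + deg G2 v)%N.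
Proof.
move=> dis; rewrite /deg -cardsU_dis.
  by apply: eq_card => e; rewrite !inE andb_orl.
by move=> y; rewrite !inE => /andP[/dis /negbTE -> _].
Qed.

Lemma rb_U (G1 G2 : {set ET}) :
  (forall x y, x \in G1 -> y \in G2 -> phi x != phi y) ->
  rainbow_part phi (G1 :|: G2) = rainbow_part phi G1 :|: rainbow_part phi G2.
Proof.
move=> sep.
have h1 : forall e, e \in G1 ->
   [set f in G1 :|: G2 | phi f == phi e] = [set f in G1 | phi f == phi e].
  move=> e eG1; apply/setP=> f; rewrite !inE; case fG2: (f \in G2); last by rewrite orbF.
  by rewrite orbT; have := sep e f eG1 fG2; rewrite eq_sym => /negbTE ->; rewrite !andbF.
have h2 : forall e, e \in G2 ->
   [set f in G1 :|: G2 | phi f == phi e] = [set f in G2 | phi f == phi e].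
  move=> e eG2; apply/setP=> f; rewrite !inE; case fG1: (f \in G1); last by [].
  by have := sep f e fG1 eG2 => /negbTE ->; rewrite !andbF.
apply/setP=> e; rewrite !inE.
case eG1: (e \in G1) => /=.
  have eG2 : (e \in G2) = false.
    by apply/negP=> eG2; have := sep e e eG1 eG2; rewrite eqxx.
  by rewrite h1 // eG2 /= orbF.
case eG2: (e \in G2) => //=.
by rewrite h2.
Qed.

Lemma F_mul (G1 G2 : {set ET}) :
  (forall x y, x \in G1 -> y \in G2 -> phi x != phi y) ->
  F (G1 :|: G2) = F G1 * F G2.
Proof.
move=> sep.
have dis : forall y, y \in G2 -> y \notin G1.
  by move=> y yG2; apply/negP=> yG1; have := sep y y yG1 yG2; rewrite eqxx.
rewrite /F rb_U // !deg_U //; last first.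
  move=> y; rewrite !inE => /andP[yG2 _]; by rewrite (negbTE (dis y yG2)).
rewrite !exprD invfM; rewrite mulrACA //.
Qed.

Definition H0 (b S : {set ET}) : R :=
  \prod_(x in b) (if x \in S then (if v \in x then 2^-1 else 1) else 1).
Definition H (b : {set ET}) (e f : ET) (S : {set ET}) : R :=
  \prod_(x in b) (if x \in S then 4 else (if (x == e) || (x == f) then 0 else 1)).
Definition Vb (b : {set ET}) := [set e in b | v \in e].

Lemma H_ge0 (b : {set ET}) (e f : ET) (S : {set ET}) : 0 <= H b e f S.
Proof. by apply: prodr_ge0 => x _; repeat case: ifP => //. Qed.

Lemma H0_ge0 (b S : {set ET}) : 0 <= H0 b S.
Proof. by apply: prodr_ge0 => x _; repeat case: ifP => //; rewrite invr_ge0. Qed.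

Lemma rb_mono (S : {set ET}) c : (forall x, x \in S -> phi x = c) ->
  rainbow_part phi S = [set e in S | #|S| == 1%N].
Proof.
move=> hc; apply/setP=> e; rewrite !inE; case eS: (e \in S) => //=.
rewrite (_ : [set f in S | phi f == phi e] = S) //.
apply/setP=> f; rewrite inE; case fS: (f \in S) => //=.
by rewrite (hc f fS) (hc e eS) eqxx.
Qed.

Lemma H0_val (b S : {set ET}) : S \subset b -> H0 b S = 2^-1 ^+ deg S v.
Proof.
move=> sSb; rewrite /H0 /deg.
rewrite (eq_bigr (fun x => if (x \in S) && (v \in x) then 2^-1 else 1)); last first.
  by move=> x _; case: (x \in S).
rewrite -big_mkcondr /= (eq_bigl (fun x => x \in [set e in S | v \in e])) ?prodr_const //.
move=> x; rewrite inE; case xS: (x \in S) => /=; last by rewrite andbF.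
by rewrite (subsetP sSb x xS).
Qed.

Lemma H_val (b : {set ET}) (e f : ET) (S : {set ET}) : e \in S -> f \in S -> S \subset b -> H b e f S = 4 ^+ #|S|.
Proof.
move=> eS fS sSb; rewrite /H.
rewrite (eq_bigr (fun x => if x \in S then 4 else 1)); last first.
  move=> x _; case xS: (x \in S) => //.
  by case: eqP => [ex|_]; [rewrite ex eS in xS | case: eqP => // fx; rewrite fx fS in xS].
rewrite -big_mkcondr /= (eq_bigl (fun x => x \in S)) ?prodr_const //.
move=> x; case xS: (x \in S) => /=; last by rewrite andbF.
by rewrite (subsetP sSb x xS).
Qed.

Lemma pointwise (b : {set ET}) (c : nat) (S : {set ET}) : (forall x, x \in b -> phi x = c) -> S \subset b ->
  F S <= H0 b S + \sum_(e in Vb b) \sum_(f in b | f != e) H b e f S.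
Proof.
move=> hc sSb.
have hcS : forall x, x \in S -> phi x = c by move=> x xS; apply: hc; apply: (subsetP sSb).
rewrite /F (rb_mono S c hcS) H0_val //.
case: (eqVneq #|S| 1%N) => [S1|S1].
  rewrite (_ : [set e in S | true] = S); last by apply/setP=> e; rewrite inE andbT.
  rewrite -exprVn -exprMn (_ : 4 * 8^-1 = (2^-1 : R)); last first.
    by field.
  by rewrite lerDl; apply: sumr_ge0 => e _; apply: sumr_ge0 => f _; apply: H_ge0.
rewrite (_ : [set e in S | false] = set0); last by apply/setP=> e; rewrite !inE ?andbF.
rewrite (_ : deg set0 v = 0%N); last first.
  by rewrite /deg (_ : [set e in (set0 : {set ET}) | v \in e] = set0) ?cards0 //; apply/setP=> e; rewrite !inE.
rewrite expr0 divr1.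
case: (posnP (deg S v)) => [d0|dpos].
  by rewrite d0 !expr0 lerDl; apply: sumr_ge0 => e _; apply: sumr_ge0 => f _; apply: H_ge0.
have : (0 < #|[set e in S | v \in e]|)%N by [].
case/card_gt0P => e; rewrite inE => /andP[eS ve].
have : (0 < #|S :\ e|)%N.
  have := cardsD1 e S; rewrite eS add1n => hS.
  have : (deg S v <= #|S|)%N by apply: subset_leq_card; apply/subsetP=> x; rewrite inE => /andP[].
  move: S1 dpos; rewrite hS; case: #|S :\ e| => //.
case/card_gt0P => f; rewrite !inE => /andP[fe fS].
have eb : e \in b by apply: (subsetP sSb).
have fb : f \in b by apply: (subsetP sSb).
rewrite -[4 ^+ _]add0r; apply: lerD; first by apply: exprn_ge0; rewrite invr_ge0.
apply: (le_trans _ (@sum_ge_term _ _ (fun x => x \in Vb b) _ e _ _)); last 2 first.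
- by rewrite inE eb ve.
- by move=> x _; apply: sumr_ge0 => y _; apply: H_ge0.
apply: (le_trans _ (@sum_ge_term _ _ (fun x => (x \in b) && (x != e)) _ f _ _)); last 2 first.
- by rewrite fb fe.
- by move=> y _; apply: H_ge0.
rewrite H_val //; apply: ler_weXn2l; first by lra.
by apply: subset_leq_card; apply/subsetP=> x; rewrite inE => /andP[].
Qed.
Variable (p : R).
Hypothesis p01 : 0 <= p <= 1.

Lemma Wt_ge0 (A S : {set ET}) : 0 <= Wt p A S.
Proof. have [p0 p1] := andP p01; by apply: prodr_ge0 => x _; case: ifP => _; lra. Qed.

Lemma WtH_sum (b : {set ET}) (h : ET -> bool -> R) :
  \sum_(S : {set ET} | S \subset b) Wt p b S * \prod_(x in b) h x (x \in S)
  = \prod_(x in b) ((1 - p) * h x false + p * h x true).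
Proof.
transitivity (\sum_(S : {set ET} | S \subset b) \prod_(x in b)
   ((fun y (β : bool) => (if β then p else 1 - p) * h y β) x (x \in S))).
  by apply: eq_bigr => S _; rewrite /Wt big_split.
rewrite (PF b (fun y (β : bool) => (if β then p else 1 - p) * h y β)).
by apply: eq_bigr => x _ /=; rewrite addrC.
Qed.

Lemma Wt_sum1 (b : {set ET}) : \sum_(S : {set ET} | S \subset b) Wt p b S = 1.
Proof.
transitivity (\sum_(S : {set ET} | S \subset b) Wt p b S * \prod_(x in b) (fun _ (_ : bool) => 1 : R) x (x \in S)).
  by apply: eq_bigr => S _; rewrite big1 ?mulr1.
etransitivity; first exact: (WtH_sum b (fun _ _ => 1)).
by rewrite big1 // => x _; rewrite !mulr1 subrK.
Qed.

Lemma block_sum (b : {set ET}) c : (forall x, x \in b -> phi x = c) ->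
  \sum_(S : {set ET} | S \subset b) Wt p b S * F S <=
  (1 - p / 2) ^+ deg b v + \sum_(e in Vb b) \sum_(f in b | f != e)
     \prod_(x in b) ((1 - p) * (if (x == e) || (x == f) then 0 else 1) + p * 4).
Proof.
move=> hc.
apply: (le_trans (y := \sum_(S : {set ET} | S \subset b) Wt p b S *
   (H0 b S + \sum_(e in Vb b) \sum_(f in b | f != e) H b e f S))).
  apply: ler_sum => S sSb; apply: ler_wpM2l; first exact: Wt_ge0.
  exact: (pointwise _ _ _ hc sSb).
rewrite (eq_bigr _ (fun S _ => mulrDr _ _ _)) big_split /=; apply: lerD.
  rewrite /H0 (WtH_sum b (fun x (β : bool) => if β then (if v \in x then 2^-1 else 1) else 1)) /deg.
  rewrite (eq_bigr (fun x : ET => if v \in x then 1 - p / 2 else 1)); last first.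
    by move=> x _; case: (v \in x); lra.
  rewrite -big_mkcondr /= (eq_bigl (fun x => x \in [set e in b | v \in e])) ?prodr_const //.
  by move=> x; rewrite inE.
rewrite (eq_bigr (fun S => \sum_(e in Vb b) \sum_(f in b | f != e) Wt p b S * H b e f S)); last first.
  by move=> S _; rewrite mulr_sumr; apply: eq_bigr => e _; rewrite mulr_sumr.
rewrite exchange_big /=; apply: ler_sum => e _.
rewrite exchange_big /=; apply: ler_sum => f _.
by rewrite /H (WtH_sum b (fun x (β : bool) => if β then 4 else (if (x == e) || (x == f) then 0 else 1))).
Qed.

Lemma factor_bound (b : {set ET}) (e f : ET) : e \in b -> f \in b -> f != e ->
  \prod_(x in b) ((1 - p) * (if (x == e) || (x == f) then 0 else 1) + p * 4)
  <= 16 * p ^+ 2 * (1 + 3 * p) ^+ #|b|.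
Proof.
have [p0 p1] := andP p01.
move=> eb fb fe; rewrite (bigD1 e) //= (bigD1 f) /=; last by rewrite fb fe.
rewrite !eqxx orTb orbT !mulr0 !add0r.
rewrite (eq_bigr (fun _ : ET => 1 + 3 * p)); last first.
  move=> x /andP[/andP[_ /negbTE ->] /negbTE ->]; rewrite orFb mulr1. lra.
rewrite (eq_bigl (fun x : ET => x \in [set x in b | (x != e) && (x != f)])); last first.
  by move=> x; rewrite inE andbA.
rewrite prodr_const.
have Z : (1 + 3 * p) ^+ #|[set x in b | (x != e) && (x != f)]| <= (1 + 3 * p) ^+ #|b|.
  apply: ler_weXn2l; first lra.
  by apply: subset_leq_card; apply/subsetP=> x; rewrite inE => /andP[].
move: Z; set X := (1 + 3 * p) ^+ _; set Y := (1 + 3 * p) ^+ _ => Z.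
have X0 : 0 <= X by apply: exprn_ge0; lra.
nra.
Qed.

Lemma double_sum_bound (b : {set ET}) :
  \sum_(e in Vb b) \sum_(f in b | f != e)
     \prod_(x in b) ((1 - p) * (if (x == e) || (x == f) then 0 else 1) + p * 4)
  <= (deg b v)%:R * (#|b|%:R * (16 * p ^+ 2 * (1 + 3 * p) ^+ #|b|)).
Proof.
have [p0 p1] := andP p01.
set Xc := 16 * p ^+ 2 * (1 + 3 * p) ^+ #|b|.
have X0 : 0 <= Xc by apply: mulr_ge0; [apply: mulr_ge0 => //; apply: exprn_ge0 | apply: exprn_ge0; lra].
apply: (le_trans (y := \sum_(e in Vb b) (#|b|%:R * Xc))); last first.
  by rewrite sumr_const [in X in _ <= X]mulr_natl /deg /Vb.
apply: ler_sum => e; rewrite inE => /andP[eb _].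
apply: (le_trans (y := \sum_(f in b | f != e) Xc)).
  by apply: ler_sum => f /andP[fb fe]; apply: factor_bound.
apply: (le_trans (y := \sum_(f in b) Xc)); last by rewrite sumr_const mulr_natl.
rewrite [leRHS](bigID (fun f => f != e)) /= lerDl.
by apply: sumr_ge0.
Qed.
End Graph.

Lemma L1 (R : realType) (q : R) (a : nat) : 0 <= q <= 1 ->
  (1 - q) ^+ a <= 1 - a%:R * q + (a%:R * q) ^+ 2 / 2.
Proof.
case/andP=> q0 q1; elim: a => [|a IH]; first by rewrite expr0 !mul0r expr0n /= mul0r subr0 addr0.
rewrite exprS -natr1.
have A0 : 0 <= a%:R :> R by apply: ler0n.
apply: (le_trans (y := (1 - q) * (1 - a%:R * q + (a%:R * q) ^+ 2 / 2))).
  by apply: ler_wpM2l => //; lra.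
move: A0; set A := a%:R => A0.
have h : 0 <= A ^+ 2 * q ^+ 3 by apply: mulr_ge0; apply: exprn_ge0.
have e1 : (1 - q) * (1 - A * q + (A * q) ^+ 2 / 2) =
   1 - A * q - q + A * q ^+ 2 + A ^+ 2 * q ^+ 2 / 2 - A ^+ 2 * q ^+ 3 / 2 by field.
have e2 : 1 - (A + 1) * q + ((A + 1) * q) ^+ 2 / 2 =
   1 - A * q - q + A * q ^+ 2 + A ^+ 2 * q ^+ 2 / 2 + q ^+ 2 / 2 by field.
rewrite e1 e2.
have h2 : 0 <= q ^+ 2 by apply: exprn_ge0.
lra.
Qed.

Lemma L2 (R : realType) (x : R) (k : nat) : 0 <= x ->
  (1 + x) ^+ k * (1 - k%:R * x) <= 1.
Proof.
move=> x0; elim: k => [|k IH]; first by rewrite expr0 mul0r subr0 mul1r.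
rewrite exprS -natr1.
have A0 : 0 <= k%:R :> R by apply: ler0n.
move: IH A0; set Z := (1 + x) ^+ k; set K := k%:R => IH A0.
have Z0 : 0 <= Z by apply: exprn_ge0; lra.
have h : 0 <= Z * ((K + 1) * x ^+ 2).
  by apply: mulr_ge0 => //; apply: mulr_ge0; [lra | apply: exprn_ge0].
have -> : (1 + x) * Z * (1 - (K + 1) * x) = Z * (1 - K * x) - Z * ((K + 1) * x ^+ 2) by ring.
lra.
Qed.

Lemma numeric (R : realType) (p : R) (a m : nat) : 0 <= p <= 1 ->
  p * m%:R <= 1000^-1 -> (a <= m)%N ->
  (1 - p / 2) ^+ a + a%:R * (m%:R * (16 * p ^+ 2 * (1 + 3 * p) ^+ m))
  <= 1 - 2 / 5 * (p * a%:R).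
Proof.
move=> p01 pm am; have [p0 p1] := andP p01.
have hL1 := @L1 R (p / 2) a ltac:(apply/andP; split; lra).
have hL2 := @L2 R (3 * p) m ltac:(lra).
have Z0 : 0 <= (1 + 3 * p) ^+ m by apply: exprn_ge0; lra.
have AM : a%:R <= m%:R :> R by rewrite ler_nat.
have A0 : 0 <= a%:R :> R by apply: ler0n.
revert hL1 hL2 AM A0 pm Z0.
generalize ((1 + 3 * p) ^+ m) ((1 - p / 2) ^+ a) (a%:R : R) (m%:R : R).
move=> Z W A M hL1 hL2 AM A0 pm Z0.
have hZ : Z <= 2.
  have : 0 <= Z * (1 / 2 - M * (3 * p)) by apply: mulr_ge0 => //; lra.
  have -> : Z * (1 / 2 - M * (3 * p)) = Z * (1 - M * (3 * p)) - Z / 2 by field.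
  lra.
set y := p * A.
have y0 : 0 <= y by apply: mulr_ge0.
have y1 : y <= 1000^-1 by apply: (le_trans _ pm); apply: ler_wpM2l.
have e1 : A * (M * (16 * p ^+ 2 * Z)) = 16 * (y * (p * M) * Z) by rewrite /y; ring.
have b1 : y * (p * M) * Z <= y * 1000^-1 * 2.
  apply: ler_pM => //; [by apply: mulr_ge0; [|apply: mulr_ge0; lra] | by apply: ler_wpM2l].
have e2 : 1 - A * (p / 2) + (A * (p / 2)) ^+ 2 / 2 = 1 - y / 2 + y * y / 8 by rewrite /y; field.
have b2 : y * y <= y * 1000^-1 by apply: ler_wpM2l.
rewrite e1; rewrite e2 in hL1.
lra.
Qed.

Lemma asym (R : realType) (p eps : R) (n : nat) : (2 <= n)%N -> 0 <= p ->
  10 ^+ 6 * ln (n%:R : R) / n%:R <= p -> eps^-1 < n%:R -> 0 < eps ->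
  n%:R * expR (- (2 / 5 * (p * (n - 1)%:R))) <= eps.
Proof.
move=> n2 p0 hp hn e0.
have N2 : 2 <= n%:R :> R by rewrite (ler_nat R 2 n).
have Npos : 0 < n%:R :> R by lra.
have L0 : 0 <= ln (n%:R : R) by apply: ln_ge0; lra.
rewrite natrB ?(leq_trans _ n2) //.
rewrite ler_pdivrMr // in hp.
have h1 : 2 * ln (n%:R : R) <= 2 / 5 * (p * (n%:R - 1)).
  have : p * n%:R / 2 <= p * (n%:R - 1).
    have : 0 <= p * (n%:R / 2 - 1) by apply: mulr_ge0 => //; lra.
    have -> : p * (n%:R / 2 - 1) = p * (n%:R - 1) - p * n%:R / 2 by field.
    lra.
  lra.
have h2 : expR (- (2 / 5 * (p * (n%:R - 1)))) <= expR (- (2 * ln (n%:R : R))).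
  by rewrite ler_expR; lra.
have h3 : expR (- (2 * ln (n%:R : R))) = (n%:R ^+ 2)^-1.
  rewrite (_ : - (2 * ln (n%:R : R)) = - ln (n%:R : R) + - ln (n%:R : R)); last by lra.
  by rewrite expRD expRN lnK ?posrE // expr2 invfM.
apply: (le_trans (y := n%:R * (n%:R ^+ 2)^-1)).
  by apply: ler_wpM2l; [lra | rewrite -h3].
rewrite expr2 invfM mulrA mulfV ?mul1r; last by lra.
rewrite -[eps^-1]div1r ltr_pdivrMr // in hn.
rewrite -[n%:R^-1]div1r ler_pdivrMr // mulrC; lra.
Qed.

Section Main.
Variables (R : realType) (n : nat) (phi : colouring n) (v : 'I_n) (p : R) (k : nat).
Hypothesis p01 : 0 <= p <= 1.
Hypothesis pk : p * k%:R <= 1000^-1.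
Hypothesis kb : k_bounded k phi.
Notation ET := {set 'I_n}.

Lemma block_final (b : {set ET}) c : b \subset Kedges n -> (forall x, x \in b -> phi x = c) ->
  \sum_(S : {set ET} | S \subset b) Wt p b S * F R n phi v S
  <= expR (- (2 / 5 * (p * (deg b v)%:R))).
Proof.
move=> bE hc.
have [p0 p1] := andP p01.
have mk : (#|b| <= k)%N.
  apply: (leq_trans _ (kb c)); apply: subset_leq_card; apply/subsetP=> x xb.
  by rewrite inE (subsetP bE x xb) hc ?eqxx.
have am : (deg b v <= #|b|)%N.
  by apply: subset_leq_card; apply/subsetP=> x; rewrite inE => /andP[].
have pm : p * #|b|%:R <= 1000^-1.
  apply: le_trans pk; apply: ler_wpM2l => //; by rewrite ler_nat.
apply: (le_trans (@block_sum R n phi v p p01 b c hc)).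
apply: (le_trans (lerD (lexx _) (@double_sum_bound R n v p p01 b))).
apply: (le_trans (@numeric R p _ _ p01 pm am)).
rewrite -[X in X <= _]/(1 + - _); exact: expR_ge1Dx.
Qed.

Lemma deg0 : deg (set0 : {set ET}) v = 0%N.
Proof. by rewrite /deg; apply/eqP; rewrite cards_eq0; apply/eqP/setP=> e; rewrite !inE. Qed.

Lemma sumWF_ge0 (A : {set ET}) : 0 <= \sum_(G : {set ET} | G \subset A) Wt p A G * F R n phi v G.
Proof.
apply: sumr_ge0 => G _; apply: mulr_ge0; first exact: (@Wt_ge0 R n p p01).
exact: F_ge0.
Qed.

Lemma IND (A : {set ET}) : A \subset Kedges n ->
  \sum_(G : {set ET} | G \subset A) Wt p A G * F R n phi v G
  <= expR (- (2 / 5 * (p * (deg A v)%:R))).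
Proof.
move: {2}#|A| (leqnn #|A|) => m; elim: m A => [|m IH] A hA AE.
  case: (set_0Vmem A) => [->|[x0 x0A]]; last first.
    have : (0 < #|A|)%N by apply/card_gt0P; exists x0.
    by rewrite ltnNge hA.
  have rb0 : rainbow_part phi (set0 : {set ET}) = set0 by apply/setP=> e; rewrite !inE.
  rewrite sum_sub0 /F rb0 deg0 /Wt big_set0 !expr0 divr1 mul1r !mulr0 oppr0 expR0.
  by [].
case: (set_0Vmem A) => [->|[x0 x0A]].
  have rb0 : rainbow_part phi (set0 : {set ET}) = set0 by apply/setP=> e; rewrite !inE.
  rewrite sum_sub0 /F rb0 deg0 /Wt big_set0 !expr0 divr1 mul1r !mulr0 oppr0 expR0.
  by [].
set c := phi x0.
set b := [set x in A | phi x == c].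
set A' := [set x in A | phi x != c].
have eA : A = b :|: A'.
  by apply/setP=> x; rewrite !inE; case: (phi x == c); rewrite ?andbT ?andbF ?orbF.
have dis : forall y, y \in A' -> y \notin b.
  by move=> y; rewrite !inE => /andP[_ /negbTE ->]; rewrite andbF.
have bE : b \subset Kedges n.
  by apply/subsetP=> x; rewrite inE => /andP[xA _]; apply: (subsetP AE).
have A'E : A' \subset Kedges n.
  by apply/subsetP=> x; rewrite inE => /andP[xA _]; apply: (subsetP AE).
have hcb : forall x, x \in b -> phi x = c by move=> x; rewrite inE => /andP[_ /eqP].
have cardA' : (#|A'| <= m)%N.
  have : #|A| = (#|b| + #|A'|)%N by rewrite {1}eA cardsU_dis.
  have : (0 < #|b|)%N by apply/card_gt0P; exists x0; rewrite inE x0A eqxx.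
  move: hA; clear; lia.
rewrite eA (sum_splitU _ dis).
rewrite (eq_bigr (fun S => \sum_(T0 : {set ET} | T0 \subset A')
            (Wt p b S * F R n phi v S) * (Wt p A' T0 * F R n phi v T0))); last first.
  move=> S sS; apply: eq_bigr => T0 sT.
  rewrite (Wt_splitU p dis sS sT) (@F_mul R n phi v S T0); first exact: mulrACA.
  move=> x y xS yT; rewrite (hcb x (subsetP sS x xS)).
  by have := subsetP sT y yT; rewrite inE eq_sym => /andP[].
rewrite -big_distrlr /= (@deg_U n v b A' dis) natrD mulrDr mulrDr opprD expRD.
apply: ler_pM; [exact: sumWF_ge0 | exact: sumWF_ge0 | exact: (block_final _ _ bE hcb) |].
exact: IH.
Qed.
End Main.

Lemma Wt_pow (R : realType) (T : finType) (p : R) (A G : {set T}) : G \subset A ->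
  p ^+ #|G| * (1 - p) ^+ (#|A| - #|G|) = Wt p A G.
Proof.
move=> sGA; rewrite /Wt (bigID (fun x => x \in G)) /=.
rewrite (eq_bigr (fun _ : T => p)); last by move=> x /andP[_ ->].
rewrite (eq_bigr (fun _ : T => 1 - p) (P := fun x => (x \in A) && (x \notin G))); last first.
  by move=> x /andP[_ /negbTE ->].
rewrite (eq_bigl (fun x : T => x \in G)); last first.
  move=> x /=; case xG: (x \in G); last by rewrite andbF.
  by rewrite (subsetP sGA x xG).
rewrite (eq_bigl (fun x : T => x \in A :\: G) (P1 := fun x => (x \in A) && (x \notin G))); last first.
  by move=> x; rewrite inE andbC.
by rewrite !prodr_const cardsD (setIidPr sGA).
Qed.

Lemma degE (n : nat) (v : 'I_n) : (n - 1 <= deg (Kedges n) v)%N.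
Proof.
have inj : {in [set~ v] &, injective (fun u : 'I_n => [set v; u])}.
  move=> u1 u2; rewrite !inE => u1v u2v e.
  have : u1 \in [set v; u2] by rewrite -e set22.
  by rewrite !inE (negbTE u1v) /= => /eqP.
have := card_in_imset inj; rewrite cardsC1 card_ord => hc.
rewrite -subn1 in hc; rewrite -hc /deg; apply: subset_leq_card; apply/subsetP=> x.
case/imsetP=> u; rewrite !inE => uv ->.
by rewrite cards2 (eq_sym v u) uv set21.
Qed.

Lemma F_bad (R : realType) (n : nat) (phi : colouring n) (v : 'I_n) (G : {set {set 'I_n}}) :
  ~~ (2 * deg G v <= 3 * deg (rainbow_part phi G) v)%N -> 1 <= F R n phi v G.
Proof.
rewrite -ltnNge => h.
rewrite /F ler_pdivlMr ?exprn_gt0 // mul1r.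
rewrite (_ : (8 : R) = 2 ^+ 3); last by rewrite !exprS expr0; lra.
rewrite (_ : (4 : R) = 2 ^+ 2); last by rewrite !exprS expr0; lra.
rewrite -!exprM; apply: ler_weXn2l; first lra.
by apply: ltnW.
Qed.

Theorem lemma3p2 (R : realType) (p : nat -> R) (k : nat -> nat) :
  (forall n, 0 <= p n <= 1) ->
  (exists n0 : nat, forall n, (n0 <= n)%N ->
     (10 ^+ 6) * ln (n%:R) / n%:R <= p n /\ p n * (k n)%:R <= (10 ^+ 3)^-1) ->
  forall eps : R, 0 < eps ->
  exists N : nat, forall n : nat, (N <= n)%N ->
    forall phi : colouring n, k_bounded (k n) phi ->
      1 - eps <= Gnp_prob (p n) (good_event phi).
Proof.
move=> hp [n0 hn0] eps e0.
exists (maxn (maxn n0 2) (Num.Def.archi_bound eps^-1)) => n.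
rewrite !geq_max => /andP[/andP[n0n n2] an] phi kbd.
have [hpl hpk] := hn0 n n0n.
have p01 := hp n.
have [p0 p1] := andP p01.
have pk : p n * (k n)%:R <= 1000^-1 by rewrite (_ : 1000 = 10 ^+ 3) // !exprS expr0; lra.
rewrite /Gnp_prob.
rewrite (eq_bigr (fun G => Wt (p n) (Kedges n) G)); last first.
  by move=> G /andP[sGE _]; rewrite Wt_pow.
have tot := @Wt_sum1 R n (p n) (Kedges n).
rewrite (bigID (fun G => good_event phi G)) /= in tot.
suff hb : \sum_(G : {set {set 'I_n}} | (G \subset Kedges n) && ~~ good_event phi G) Wt (p n) (Kedges n) G <= eps.
  lra.
have WF0 : forall G w, 0 <= Wt (p n) (Kedges n) G * F R n phi w G.
  by move=> G w; apply: mulr_ge0; [exact: (@Wt_ge0 R n (p n) p01) | exact: F_ge0].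
apply: (le_trans (y := \sum_(G : {set {set 'I_n}} | G \subset Kedges n) Wt (p n) (Kedges n) G * \sum_(w : 'I_n) F R n phi w G)).
  apply: (le_trans (y := \sum_(G : {set {set 'I_n}} | (G \subset Kedges n) && ~~ good_event phi G)
        Wt (p n) (Kedges n) G * \sum_(w : 'I_n) F R n phi w G)).
    apply: ler_sum => G /andP[_ bad]; apply: ler_peMr; first exact: (@Wt_ge0 R n (p n) p01).
    move/forallPn: bad => [w hw]; apply: (le_trans (@F_bad R n phi w G hw)).
    apply: (@sum_ge_term R _ (fun _ => true) _ w) => // i _; exact: F_ge0.
  rewrite [leRHS](bigID (fun G => good_event phi G)) /= lerDr.
  apply: sumr_ge0 => G _; rewrite mulr_sumr; apply: sumr_ge0 => w _; exact: WF0.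
rewrite (eq_bigr (fun G => \sum_(w : 'I_n) Wt (p n) (Kedges n) G * F R n phi w G)); last first.
  by move=> G _; rewrite mulr_sumr.
rewrite exchange_big /=.
apply: (le_trans (y := \sum_(w : 'I_n) expR (- (2 / 5 * (p n * (n - 1)%:R))))).
  apply: ler_sum => w _.
  apply: (le_trans (IND R n phi w (p n) (k n) p01 pk kbd (Kedges n) (subxx _))).
  rewrite ler_expR lerN2; apply: ler_wpM2l; first lra.
  by apply: ler_wpM2l => //; rewrite ler_nat; exact: degE.
rewrite sumr_const card_ord -(mulr_natl (expR _) n).
apply: asym => //.
apply: (lt_le_trans (archi_boundP _)); first by rewrite invr_ge0; lra.
by rewrite ler_nat.
Qed.
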